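(* Let $\gamma>0$, $b>0$, $u_{max}>0$, $i_0\in[0,1]$, and let $\beta$ be a bounded nonnegative (measurable) function of time. For a deadline $T>0$, consider the problem of minimizing $J(u)=-i(T)+\int_0^T b\,u^2(t)\,dt$ over Lebesgue integrable $u$ with $0\le u(t)\le u_{max}$, subject to $\dot i(t) = -\beta(t) i^2(t) + (\beta(t)-\gamma-u(t)) i(t) + u(t)$, $i(0)=i_0$, $0\le i(t)\le 1$. The optimality system (from Pontryagin's Maximum Principle) for this problem consists of the state equation above together with the adjoint equation $$\dot\lambda(t) = 2\beta(t)\, i(t)\,\lambda(t) - \big(\beta(t)-\gamma-u(t)\big)\lambda(t),\qquad \lambda(T)=1,$$ and the control characterization $$u(t)=\min\Big\{\max\Big\{\tfrac{\lambda(t)(1-i(t))}{2b},\,0\Big\},\,u_{max}\Big\}.$$ Then for a sufficiently small campaign deadline $T$, the state and adjoint trajectories $(i,\lambda)$ at the optimum (i.e. the solution of this optimality system) and the optimal control $u$ are unique.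
   Context: Controlled SIS information epidemic: $i(t)$ is the fraction of informed individuals, $\beta(t)$ the effective spreading rate, $\gamma$ the recovery rate, $u(t)$ the direct recruitment control, $\lambda(t)$ the adjoint variable. *)

(* Defs.v *)
From HB Require Import structures.
From mathcomp Require Import all_boot all_order all_algebra.
From mathcomp Require Import all_classical all_reals all_analysis.
Set Implicit Arguments. Unset Strict Implicit. Unset Printing Implicit Defensive.
Import Order.TTheory GRing.Theory Num.Theory.
Local Open Scope classical_set_scope.
Local Open Scope ring_scope.

Section SIS.
Variable R : realType.

Notation mu := (@lebesgue_measure R).

Definition state_rhs (beta : R -> R) (gamma : R) (i u : R -> R) (t : R) : R :=
  - beta t * i t ^+ 2 + (beta t - gamma - u t) * i t + u t.

Definition adjoint_rhs (beta : R -> R) (gamma : R) (i lam u : R -> R) (t : R) : R :=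
  2 * beta t * i t * lam t - (beta t - gamma - u t) * lam t.

Definition control_char (b umax : R) (i lam : R -> R) (t : R) : R :=
  Num.min (Num.max (lam t * (1 - i t) / (2 * b)) 0) umax.

(* Solutions of the ODEs
   are understood in the Caratheodory (absolutely continuous / integral) sense:
   the right-hand sides are Lebesgue integrable on [0,T] and the trajectories
   are given by their integrals. *)
Definition optimality_system (beta : R -> R) (gamma b umax i0 T : R)
    (i lam u : R -> R) : Prop :=
  mu.-integrable `[0, T] (EFin \o u) /\
      (forall t, 0 <= t <= T -> 0 <= u t <= umax) /\
      (forall t, 0 <= t <= T -> 0 <= i t <= 1) /\
      mu.-integrable `[0, T] (EFin \o state_rhs beta gamma i u) /\
      (forall t, 0 <= t <= T ->
         i t = i0 + Rintegral mu `[0, t] (state_rhs beta gamma i u)) /\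
      mu.-integrable `[0, T] (EFin \o adjoint_rhs beta gamma i lam u) /\
      (forall t, 0 <= t <= T ->
         lam t = lam 0 + Rintegral mu `[0, t] (adjoint_rhs beta gamma i lam u)) /\
      lam T = 1 /\
      (forall t, 0 <= t <= T -> u t = control_char b umax i lam t).

End SIS.

(* Main.v *)
Require Import Defs.
From HB Require Import structures.
From mathcomp Require Import all_boot all_order all_algebra.
From mathcomp Require Import all_classical all_reals all_analysis.
From mathcomp Require Import ring lra.
Import Order.TTheory GRing.Theory Num.Theory.
Local Open Scope classical_set_scope.
Local Open Scope ring_scope.

Section H.
Variable R : realType.
Notation mu := (@lebesgue_measure R).

Lemma int_sub (T t : R) (f : R -> R) : 0 <= t <= T ->
  mu.-integrable `[0, T] (EFin \o f) -> mu.-integrable `[0, t] (EFin \o f).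
Proof.
move=> /andP[t0 tT] h; apply: integrableS h => //.
move=> x /=; rewrite !in_itv /= => /andP[-> xt] /=; exact: le_trans xt tT.
Qed.

Lemma int_bound (T t c : R) (f : R -> R) : 0 <= t <= T -> 0 <= c ->
  mu.-integrable `[0, T] (EFin \o f) ->
  (forall x, 0 <= x <= T -> `|f x| <= c) ->
  `|Rintegral mu `[0, t] f| <= c * t.
Proof.
move=> tT c0 hT hb; have ht := @int_sub T t f tT hT.
have mD : measurable (`[0, t] : set R) by exact: measurable_itv.
rewrite -lee_fin EFin_normr_Rintegral //.
apply: le_trans (le_abse_integral mu mD _) _.
  by case/integrableP: ht.
have := @integral_le_bound _ _ _ mu (`[0, t] : set R) (EFin \o f) c%:E mD.
case/integrableP: (ht) => mf _.
move=> /(_ mf); rewrite lee_fin => /(_ c0).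
have mt : mu (`[0, t] : set R) = t%:E.
  rewrite lebesgue_measure_itv /= lte_fin.
  case/andP: (tT) => t0 _.
  case: ltP => [_|t0']; first by rewrite sube0.
  by have -> : t = 0 by apply/eqP; rewrite eq_le t0' t0.
move=> H.
have H2 : (\int[mu]_(x in `[0%R, t]) `|(EFin \o f) x| <= c%:E * mu (`[0%R, t] : set R))%E.
  apply: H; apply: aeW => x; rewrite /= in_itv /= => /andP[x0 xt].
  by rewrite lee_fin; apply: hb; rewrite x0 (le_trans xt) //; case/andP: tT.
by move: H2; rewrite mt.
Qed.

Lemma int_bounded (T : R) (f : R -> R) : mu.-integrable `[0, T] (EFin \o f) ->
  exists B, forall t, 0 <= t <= T -> `|Rintegral mu `[0, t] f| <= B.
Proof.
move=> hT; case/integrableP: (hT) => mf fin.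
exists (fine (\int[mu]_(x in `[0%R, T]) `|(EFin \o f) x|)%E) => t tT.
have ht := @int_sub T t f tT hT.
have mD : measurable (`[0, t] : set R) by exact: measurable_itv.
rewrite -lee_fin EFin_normr_Rintegral // fineK; last first.
  by rewrite ge0_fin_numE //; exact: integral_ge0.
apply: le_trans (le_abse_integral mu mD _) _; first by case/integrableP: ht.
apply: (@ge0_subset_integral _ _ _ mu _ _ mD (measurable_itv `[0, T])).
- by case/integrableP: (integrable_abse hT).
- by move=> x _; exact: abse_ge0.
move=> x /=; rewrite !in_itv /= => /andP[-> xt] /=; case/andP: tT => _ tT.
exact: le_trans xt tT.
Qed.


Lemma int_bound2 (T t c : R) (f1 f2 : R -> R) : 0 <= t <= T -> 0 <= c ->
  mu.-integrable `[0, T] (EFin \o f1) ->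
  mu.-integrable `[0, T] (EFin \o f2) ->
  (forall x, 0 <= x <= T -> `|f1 x - f2 x| <= c) ->
  `|Rintegral mu `[0, t] f1 - Rintegral mu `[0, t] f2| <= c * t.
Proof.
move=> tT c0 h1 h2 hb.
rewrite -RintegralB //; last 2 first.
- exact: (@int_sub T t f1 tT h1).
- exact: (@int_sub T t f2 tT h2).
apply: (@int_bound T t c (fun x => f1 x - f2 x)) => //.
move: (@integrableB _ _ _ mu _ (measurable_itv _) _ _ h1 h2); apply: eq_integrable => // x _ /=.
Qed.

Lemma sup_contr (T B a q : R) (h : R -> R) : 0 <= T ->
  (forall t, 0 <= t <= T -> h t <= B) ->
  (forall S, (forall t, 0 <= t <= T -> h t <= S) ->
     forall t, 0 <= t <= T -> h t <= a + q * S) ->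
  exists S, (forall t, 0 <= t <= T -> h t <= S) /\ S <= a + q * S.
Proof.
move=> T0 hB hyp.
set E := [set y | exists2 t, 0 <= t <= T & y = h t].
have hs : has_sup E.
  split; first by exists (h 0), 0 => //; rewrite lexx T0.
  by exists B => y [t tT ->]; exact: hB.
have ub : forall t, 0 <= t <= T -> h t <= sup E.
  by move=> t tT; apply: sup_upper_bound => //; exists t.
exists (sup E); split => //.
apply: ge_sup; first by case: hs.
by move=> y [t tT ->]; exact: hyp.
Qed.

End H.
Arguments int_bounded {R T f}.


Section A.
Variable R : realFieldType.

Lemma abs_le (x A : R) : -A <= x -> x <= A -> `|x| <= A.
Proof. by move=> h1 h2; rewrite ler_norml h1 h2. Qed.

Lemma abs2 (a x b y A B : R) : `|a| <= A -> `|b| <= B ->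
  `|a * x + b * y| <= A * `|x| + B * `|y|.
Proof.
move=> ha hb; apply: le_trans (ler_normD _ _) _; rewrite !normrM.
by apply: lerD; apply: ler_wpM2r.
Qed.

Lemma abs3 (a x b y c z A B C : R) : `|a| <= A -> `|b| <= B -> `|c| <= C ->
  `|a * x + b * y + c * z| <= A * `|x| + B * `|y| + C * `|z|.
Proof.
move=> ha hb hc; apply: le_trans (ler_normD _ _) _; rewrite normrM.
by apply: lerD; [exact: abs2 | apply: ler_wpM2r].
Qed.

Lemma state_diff (M g um bi i1 i2 u1 u2 : R) :
  0 <= bi <= M -> 0 <= g -> 0 <= i1 <= 1 -> 0 <= i2 <= 1 ->
  0 <= u1 <= um -> 0 <= u2 <= um ->
  `|(- bi * i1 ^+ 2 + (bi - g - u1) * i1 + u1) -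
    (- bi * i2 ^+ 2 + (bi - g - u2) * i2 + u2)|
  <= (3 * M + g + um) * `|i1 - i2| + 1 * `|u1 - u2|.
Proof.
move=> /andP[b0 bM] g0 /andP[a0 a1] /andP[c0 c1] /andP[d0 d1] /andP[e0 e1].
have -> : (- bi * i1 ^+ 2 + (bi - g - u1) * i1 + u1) -
    (- bi * i2 ^+ 2 + (bi - g - u2) * i2 + u2) =
  (- bi * (i1 + i2) + bi - g - u1) * (i1 - i2) + (1 - i2) * (u1 - u2) by ring.
apply: abs2; apply: abs_le; nra.
Qed.

Lemma adj_diff (M g um bi i1 i2 l1 l2 u1 u2 : R) :
  0 <= bi <= M -> 0 <= g -> 0 <= i1 <= 1 -> 0 <= i2 <= 1 ->
  0 <= u1 <= um -> 0 <= u2 <= um -> `|l2| <= 2 ->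
  `|(2 * bi * i1 * l1 - (bi - g - u1) * l1) -
    (2 * bi * i2 * l2 - (bi - g - u2) * l2)|
  <= (3 * M + g + um) * `|l1 - l2| + (4 * M) * `|i1 - i2| + 2 * `|u1 - u2|.
Proof.
move=> /andP[b0 bM] g0 /andP[a0 a1] /andP[c0 c1] /andP[d0 d1] /andP[e0 e1] hl.
have -> : (2 * bi * i1 * l1 - (bi - g - u1) * l1) -
    (2 * bi * i2 * l2 - (bi - g - u2) * l2) =
  (2 * bi * i1 - bi + g + u1) * (l1 - l2) + (2 * bi * l2) * (i1 - i2)
  + l2 * (u1 - u2) by ring.
apply: abs3 => //; first by apply: abs_le; nra.
rewrite normrM (ger0_norm (_ : 0 <= 2 * bi)); last nra.
have := normr_ge0 l2; nra.
Qed.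

Lemma adj_one (M g um bi i l u : R) :
  0 <= bi <= M -> 0 <= g -> 0 <= i <= 1 -> 0 <= u <= um ->
  `|2 * bi * i * l - (bi - g - u) * l| <= (3 * M + g + um) * `|l|.
Proof.
move=> /andP[b0 bM] g0 /andP[a0 a1] /andP[d0 d1].
have -> : 2 * bi * i * l - (bi - g - u) * l = (2 * bi * i - bi + g + u) * l by ring.
rewrite normrM; apply: ler_wpM2r => //; apply: abs_le; nra.
Qed.

Lemma clamp_lip (a a' m : R) : 0 <= m ->
  `|Num.min (Num.max a 0) m - Num.min (Num.max a' 0) m| <= `|a - a'|.
Proof.
move=> m0.
have [y0|y0] := lerP 0 (a - a'); [rewrite (ger0_norm y0) | rewrite (ltr0_norm y0)];
 apply: abs_le; rewrite /Num.max /Num.min;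
 case: (ltrP a 0) => ?; case: (ltrP a' 0) => ? /=;
 repeat (case: ifPn => [?|]; last rewrite -leNgt => ?); lra.
Qed.

Lemma ctrl_diff (b um i1 i2 l1 l2 : R) : 0 < b -> 0 <= um ->
  0 <= i1 <= 1 -> 0 <= i2 <= 1 -> `|l2| <= 2 ->
  `|Num.min (Num.max (l1 * (1 - i1) / (2 * b)) 0) um -
    Num.min (Num.max (l2 * (1 - i2) / (2 * b)) 0) um|
  <= (`|l1 - l2| + 2 * `|i1 - i2|) / (2 * b).
Proof.
move=> b0 um0 /andP[a0 a1] /andP[c0 c1] hl.
have H := clamp_lip (l1 * (1 - i1) / (2 * b)) (l2 * (1 - i2) / (2 * b)) um um0.
apply: le_trans H _.
have -> : l1 * (1 - i1) / (2 * b) - l2 * (1 - i2) / (2 * b) =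
  ((1 - i1) * (l1 - l2) + (- l2) * (i1 - i2)) / (2 * b) by field; lra.
rewrite normrM (ger0_norm (_ : 0 <= (2 * b)^-1)); last by rewrite invr_ge0; lra.
apply: ler_wpM2r; first by rewrite invr_ge0; lra.
have -> : `|l1 - l2| + 2 * `|i1 - i2| = 1 * `|l1 - l2| + 2 * `|i1 - i2| by rewrite mul1r.
by apply: abs2; [apply: abs_le; lra | rewrite normrN].
Qed.

End A.
Arguments state_diff {R M g um bi i1 i2 u1 u2}.
Arguments adj_diff {R M g um bi i1 i2 l1 l2 u1 u2}.
Arguments adj_one {R M g um bi i l u}.
Arguments ctrl_diff {R b um i1 i2 l1 l2}.



Section L.
Variable R : realType.
Notation mu := (@lebesgue_measure R).

Lemma lam_bound (beta : R -> R) (gamma b umax i0 T M : R) (i lam u : R -> R) :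
  0 < gamma -> 0 <= umax -> (forall t, 0 <= beta t <= M) -> 0 < T ->
  4 * (3 * M + gamma + umax) * T <= 1 ->
  optimality_system beta gamma b umax i0 T i lam u ->
  forall t, 0 <= t <= T -> `|lam t| <= 2.
Proof.
move=> g0 um0 hb T0 hT [iu [ub [ib [ist [ie [ai [ae [lT uc]]]]]]]].
have TT : 0 <= T <= T by rewrite lexx ltW.
have T0b : (0:R) <= 0 <= T by apply/andP; split; [exact: lexx | exact: ltW].
have M0 : 0 <= M by case/andP: (hb 0) => h1 h2; exact: le_trans h1 h2.
set C := 3 * M + gamma + umax.
have C0 : 0 <= C by rewrite /C; lra.
have [B hB] := int_bounded ai.
have l0 : lam 0 = 1 - Rintegral (@lebesgue_measure R) `[0, T] (adjoint_rhs beta gamma i lam u).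
  by rewrite -lT (ae T TT); ring.
have [S [hS hS2]] : exists S, (forall t, 0 <= t <= T -> `|lam t| <= S) /\
    S <= 1 + (2 * C * T) * S.
  apply: (@sup_contr R T (`|lam 0| + B)) => //; first exact: ltW.
    move=> t tT; rewrite (ae t tT); apply: le_trans (ler_normD _ _) _.
    by rewrite lerD2l; exact: hB.
  move=> S hS t tT.
  have S0 : 0 <= S := le_trans (normr_ge0 _) (hS 0 T0b).
  have hg : forall x, 0 <= x <= T ->
      `|adjoint_rhs beta gamma i lam u x| <= C * S.
    move=> x xT; rewrite /adjoint_rhs.
    apply: le_trans (adj_one (hb x) (ltW g0) (ib x xT) (ub x xT)) _.
    by rewrite ler_wpM2l // hS.
  have h1 := @int_bound R T t (C * S) _ tT (mulr_ge0 C0 S0) ai hg.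
  have h2 := @int_bound R T T (C * S) _ TT (mulr_ge0 C0 S0) ai hg.
  rewrite (ae t tT) l0.
  set a := Rintegral _ _ _ in h2 *; set c := Rintegral _ _ _ in h1 *.
  have ht : C * S * t <= C * S * T.
    by apply: ler_wpM2l; [exact: mulr_ge0 | case/andP: tT].
  have e1 : `|1 - a + c| <= 1 + `|a| + `|c|.
    apply: le_trans (ler_normD _ _) _; rewrite lerD2r.
    by apply: le_trans (ler_normB _ _) _; rewrite normr1.
  have -> : 2 * C * T * S = C * S * T + C * S * T by ring.
  lra.
move=> t tT; apply: le_trans (hS t tT) _.
have S0 : 0 <= S := le_trans (normr_ge0 _) (hS 0 T0b).
have h4 : 0 <= S * (1 - 4 * C * T) by apply: mulr_ge0 => //; rewrite /C; lra.
have -> : (2:R) = 2 by [].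
move: h4 hS2; rewrite /C; nra.
Qed.

End L.
Arguments lam_bound {R beta gamma b umax i0 T M i lam u}.

Theorem theorem2 (R : realType) (gamma b umax i0 : R) (beta : R -> R) :
  0 < gamma -> 0 < b -> 0 < umax -> 0 <= i0 <= 1 ->
  measurable_fun setT beta ->
  (forall t, 0 <= beta t) ->
  (exists M : R, forall t, beta t <= M) ->
  exists T0 : R, 0 < T0 /\
    forall T : R, 0 < T -> T < T0 ->
    forall i1 lam1 u1 i2 lam2 u2 : R -> R,
      optimality_system beta gamma b umax i0 T i1 lam1 u1 ->
      optimality_system beta gamma b umax i0 T i2 lam2 u2 ->
      forall t, 0 <= t <= T ->
        [/\ i1 t = i2 t, lam1 t = lam2 t & u1 t = u2 t].
Proof.
move=> g0 b0 um0 i0b _ bpos [M hM].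
have M0 : 0 <= M by exact: le_trans (bpos 0) (hM 0).
have hb : forall t, 0 <= beta t <= M by move=> t; rewrite bpos hM.
set C := 3 * M + gamma + umax.
have C0 : 0 <= C by rewrite /C; lra.
have bi0 : 0 < b^-1 by rewrite invr_gt0.
set Q := C + 4 * M + 2 * b^-1.
have Q0 : 0 <= Q by rewrite /Q; lra.
have D0 : 0 < 4 * (C + Q) + 1 by lra.
exists (1 / (4 * (C + Q) + 1)); split; first by rewrite divr_gt0.
move=> T T0 TT0 i1 lam1 u1 i2 lam2 u2 H1 H2.
have hT : T * (4 * (C + Q) + 1) < 1 by rewrite -ltr_pdivlMr.
have hC : 4 * C * T <= 1 by nra.
have hQ : 3 * Q * T < 1 by nra.
have L1 := lam_bound g0 (ltW um0) hb T0 hC H1.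
have L2 := lam_bound g0 (ltW um0) hb T0 hC H2.
case: H1 => [iu1 [ub1 [ib1 [ist1 [ie1 [ai1 [ae1 [lT1 uc1]]]]]]]].
case: H2 => [iu2 [ub2 [ib2 [ist2 [ie2 [ai2 [ae2 [lT2 uc2]]]]]]]].
have TT : 0 <= T <= T by rewrite lexx ltW.
have T0b : (0:R) <= 0 <= T by apply/andP; split; [exact: lexx | exact: ltW].
have l01 : lam1 0 = 1 - Rintegral (@lebesgue_measure R) `[0, T] (adjoint_rhs beta gamma i1 lam1 u1).
  by rewrite -lT1 (ae1 T TT); ring.
have l02 : lam2 0 = 1 - Rintegral (@lebesgue_measure R) `[0, T] (adjoint_rhs beta gamma i2 lam2 u2).
  by rewrite -lT2 (ae2 T TT); ring.
have du_b : forall x, 0 <= x <= T -> `|u1 x - u2 x| <=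
    (`|lam1 x - lam2 x| + 2 * `|i1 x - i2 x|) / (2 * b).
  move=> x xT; rewrite (uc1 x xT) (uc2 x xT) /control_char.
  exact: ctrl_diff b0 (ltW um0) (ib1 x xT) (ib2 x xT) (L2 x xT).
set h := fun t => `|i1 t - i2 t| + `|lam1 t - lam2 t|.
have [S [hS hS2]] : exists S, (forall t, 0 <= t <= T -> h t <= S) /\
    S <= 0 + (3 * Q * T) * S.
  apply: (@sup_contr R T 6) => //; first exact: ltW.
    move=> t tT; rewrite /h.
    have e1 : `|i1 t - i2 t| <= 2.
      apply: le_trans (ler_normB _ _) _.
      move: (ib1 t tT) (ib2 t tT) => /andP[a1 a2] /andP[c1 c2].
      rewrite !ger0_norm //; lra.
    have e2 : `|lam1 t - lam2 t| <= 4.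
      apply: le_trans (ler_normB _ _) _.
      have := L1 t tT; have := L2 t tT; lra.
    lra.
  move=> S hS t tT.
  have S0 : 0 <= S := le_trans (addr_ge0 (normr_ge0 _) (normr_ge0 _)) (hS 0 T0b).
  have hdi : forall x, 0 <= x <= T -> `|i1 x - i2 x| <= S.
    move=> x xT; apply: le_trans (hS x xT); rewrite /h lerDl //.
  have hdl : forall x, 0 <= x <= T -> `|lam1 x - lam2 x| <= S.
    move=> x xT; apply: le_trans (hS x xT); rewrite /h lerDr //.
  have hdu : forall x, 0 <= x <= T -> `|u1 x - u2 x| <= S * b^-1.
    move=> x xT; apply: le_trans (du_b x xT) _.
    rewrite ler_pdivrMr; last lra.
    have -> : S * b^-1 * (2 * b) = 2 * S by field; lra.
    have := normr_ge0 (lam1 x - lam2 x); have := hS x xT; rewrite /h; lra.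
  have hf : forall x, 0 <= x <= T ->
      `|state_rhs beta gamma i1 u1 x - state_rhs beta gamma i2 u2 x| <= Q * S.
    move=> x xT; rewrite /state_rhs.
    apply: le_trans (state_diff (hb x) (ltW g0) (ib1 x xT) (ib2 x xT)
                       (ub1 x xT) (ub2 x xT)) _.
    have := ler_wpM2l C0 (hdi x xT); have := hdu x xT.
    have : 0 <= M * S by exact: mulr_ge0.
    have : 0 <= S / b by rewrite divr_ge0 // ltW.
    have -> : Q * S = C * S + 4 * (M * S) + 2 * (S / b) by rewrite /Q; ring.
    rewrite -/C; lra.
  have hg : forall x, 0 <= x <= T ->
      `|adjoint_rhs beta gamma i1 lam1 u1 x - adjoint_rhs beta gamma i2 lam2 u2 x|
      <= Q * S.
    move=> x xT; rewrite /adjoint_rhs.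
    apply: le_trans (adj_diff (hb x) (ltW g0) (ib1 x xT) (ib2 x xT)
                       (ub1 x xT) (ub2 x xT) (L2 x xT)) _.
    have := ler_wpM2l C0 (hdl x xT); have := hdu x xT.
    have M4 : 0 <= 4 * M by lra.
    have := ler_wpM2l M4 (hdi x xT).
    have : 0 <= S / b by rewrite divr_ge0 // ltW.
    have -> : Q * S = C * S + 4 * M * S + 2 * (S / b) by rewrite /Q; ring.
    rewrite -/C; lra.
  have QS0 : 0 <= Q * S by exact: mulr_ge0.
  have ei := @int_bound2 R T t (Q * S) _ _ tT QS0 ist1 ist2 hf.
  have el := @int_bound2 R T t (Q * S) _ _ tT QS0 ai1 ai2 hg.
  have eT := @int_bound2 R T T (Q * S) _ _ TT QS0 ai1 ai2 hg.
  have ht : Q * S * t <= Q * S * T by apply: ler_wpM2l => //; case/andP: tT.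
  have eqi : i1 t - i2 t =
      Rintegral (@lebesgue_measure R) `[0, t] (state_rhs beta gamma i1 u1) -
      Rintegral (@lebesgue_measure R) `[0, t] (state_rhs beta gamma i2 u2).
    by rewrite (ie1 t tT) (ie2 t tT); ring.
  have eql : lam1 t - lam2 t =
      - (Rintegral (@lebesgue_measure R) `[0, T] (adjoint_rhs beta gamma i1 lam1 u1) -
         Rintegral (@lebesgue_measure R) `[0, T] (adjoint_rhs beta gamma i2 lam2 u2)) +
      (Rintegral (@lebesgue_measure R) `[0, t] (adjoint_rhs beta gamma i1 lam1 u1) -
       Rintegral (@lebesgue_measure R) `[0, t] (adjoint_rhs beta gamma i2 lam2 u2)).
    by rewrite (ae1 t tT) (ae2 t tT) l01 l02; ring.
  rewrite /h eqi eql.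
  apply: le_trans (lerD (lexx _) (ler_normD _ _)) _; rewrite normrN.
  have -> : 3 * Q * T * S = Q * S * T + Q * S * T + Q * S * T by ring.
  lra.
have S0 : 0 <= S := le_trans (addr_ge0 (normr_ge0 _) (normr_ge0 _)) (hS 0 T0b).
have Sle : S <= 0 by nra.
move=> t tT.
have := hS t tT; rewrite /h => hh.
have e1 : `|i1 t - i2 t| = 0.
  by apply/eqP; rewrite eq_le normr_ge0 andbT; have := normr_ge0 (lam1 t - lam2 t); lra.
have e2 : `|lam1 t - lam2 t| = 0.
  by apply/eqP; rewrite eq_le normr_ge0 andbT; have := normr_ge0 (i1 t - i2 t); lra.
move/eqP: e1; rewrite normr_eq0 subr_eq0 => /eqP e1.
move/eqP: e2; rewrite normr_eq0 subr_eq0 => /eqP e2.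
split => //.
by rewrite (uc1 t tT) (uc2 t tT) /control_char e1 e2.
Qed.
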